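(* Assume (A1). For all $\epsilon>0$ small enough there exists a constant $C_1<\infty$ such that for all $x\in\mathbb{Z}^2$ and all integers $k>\|x\|_\infty$, \[ \mathbb{P}_\epsilon\bigl(m_A(x)=k\bigr)\le\frac{C_1}{(k-\|x\|_\infty)^{\alpha-1}}. \]
   Context: Couplings $J_{x,y}=J_{x-y}$ with $J_x=J_{-x}\ge0$, $\sum_{x\in\mathbb{Z}^2}J_x=1$; (A1): there exist $\alpha>4$, $J\ge0$ with $J_x\le J\|x\|_1^{-\alpha}$ for $x\ne0$. For $\epsilon\in(0,1]$, $\mathbb{P}_\epsilon$ is independent Bernoulli bond percolation on the set of unordered pairs $\{x,y\}$ of distinct vertices of $\mathbb{Z}^2$, each open with probability $\epsilon J_{x,y}$; $A$ is the set of open edges and $u\leftrightarrow v$ means $u,v$ are joined by a finite chain of open edges (or $u=v$). $m_A(u)=\sup\{\|v\|_\infty: v\leftrightarrow u\}$. *)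

(* Defs.v *)
From HB Require Import structures.
From mathcomp Require Import all_boot all_order all_algebra.
From mathcomp Require Import all_classical all_reals all_analysis.
From Stdlib Require Import Relations.
Set Implicit Arguments. Unset Strict Implicit. Unset Printing Implicit Defensive.
Import Order.TTheory GRing.Theory Num.Theory.
Local Open Scope classical_set_scope.
Local Open Scope ring_scope.

Definition Z2 := (int * int)%type.

Definition norm1 (x : Z2) : nat := (`|x.1| + `|x.2|)%N.
Definition normi (x : Z2) : nat := maxn `|x.1|%N `|x.2|%N.
Definition subZ2 (x y : Z2) : Z2 := (x.1 - y.1, x.2 - y.2).

(* a strict total order on Z^2, used to represent unordered pairs {x,y}, x<>y *)
Definition lexlt (u v : Z2) : bool := (u.1 < v.1) || ((u.1 == v.1) && (u.2 < v.2)).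

(* the edges: unordered pairs of distinct vertices, represented as (u,v) with u <lex v *)
Definition edge := {e : Z2 * Z2 | lexlt e.1 e.2}.

(* configuration w : edge -> bool (w e = true iff e is open); adjacency and connection *)
Definition adj (w : edge -> bool) (u v : Z2) : Prop :=
  exists e : edge, w e /\ (val e = (u, v) \/ val e = (v, u)).

Definition conn (w : edge -> bool) : Z2 -> Z2 -> Prop := clos_refl_trans Z2 (adj w).

Definition mA (R : realType) (w : edge -> bool) (u : Z2) : \bar R :=
  ereal_sup [set ((normi v)%:R)%:E | v in [set v | conn w v u]].

Definition mutually_independent (R : realType) d (T : measurableType d)
  (P : probability T R) (I : eqType) (E : I -> set T) : Prop :=
  forall s : seq I, uniq s ->
    P (\bigcap_(i in [set` s]) E i) = (\prod_(i <- s) P (E i))%E.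

Definition bernoulli_percolation (R : realType) d (T : measurableType d)
  (P : probability T R) (omega : T -> edge -> bool) (p : edge -> R) : Prop :=
  [/\ forall e, measurable [set t | omega t e],
      forall e, P [set t | omega t e] = (p e)%:E
    & mutually_independent P (fun e => [set t | omega t e])].

Definition eps_prob (R : realType) (J : Z2 -> R) (eps : R) (e : edge) : R :=
  eps * J (subZ2 (val e).1 (val e).2).

(* Main.v *)
Require Import Defs.
From HB Require Import structures.
From mathcomp Require Import all_boot all_order all_algebra.
From mathcomp Require Import all_classical all_reals all_analysis.
From mathcomp Require Import zify ring lra.
From Stdlib Require Import Relations.
Import Order.TTheory GRing.Theory Num.Theory.
Local Open Scope classical_set_scope.
Local Open Scope ring_scope.
Definition z0 : Z2 := (0,0).
Definition sumZ2 (s : seq Z2) : Z2 := (\sum_(y <- s) y.1, \sum_(y <- s) y.2).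
Definition rmi (i : nat) (s : seq Z2) := take i s ++ drop i.+1 s.

Lemma sum_pred1_seq (R : realType) (I : eqType) (U : seq I) (a : I) (G : I -> R) :
  uniq U -> a \in U -> \sum_(v <- U | a == v) G v = G a.
Proof.
move=> uU aU; rewrite big_mkcond (bigD1_seq a) //= eqxx big1 ?addr0 // => v.
by rewrite eq_sym => /negbTE ->.
Qed.

Lemma sum_group (R : realType) (I J : eqType) (s : seq I) (f : I -> J) (F : I -> R) :
  \sum_(i <- s) F i = \sum_(v <- undup (map f s)) \sum_(i <- s | f i == v) F i.
Proof.
under [RHS]eq_bigr do rewrite big_mkcond.
rewrite exchange_big /=; apply: eq_big_seq => i iS.
by rewrite -big_mkcond sum_pred1_seq ?undup_uniq // mem_undup; apply: map_f.
Qed.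

Lemma prod_le1 (R : realType) (J : Z2 -> R) :
  (forall x, 0 <= J x) -> (forall U : seq Z2, uniq U -> \sum_(u <- U) J u <= 1) ->
  forall m (T : seq (seq Z2)), uniq T -> (forall t, t \in T -> size t = m) ->
  \sum_(t <- T) \prod_(y <- t) J y <= 1.
Proof.
move=> J0 JU; elim=> [|m IH] T uT sT.
- case: T uT sT => [|t T] /=; first by rewrite big_nil.
  move=> /andP[tT uT] sT.
  have t0 : t = [::] by apply/size0nil/sT; rewrite mem_head.
  case: T tT uT sT => [|t' T] tT uT sT.
    by rewrite big_seq1 t0 big_nil.
  exfalso; move: tT; rewrite t0 in_cons.
  have -> : t' = [::] by apply/size0nil/sT; rewrite !in_cons eqxx orbT.
  by rewrite eqxx.
- rewrite (@sum_group _ _ _ _ (head ((0,0) : Z2))).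
  apply: (le_trans _ (JU (undup (map (head ((0,0):Z2)) T)) (undup_uniq _))).
  apply: ler_sum => a _.
  have -> : \sum_(t <- T | head (0,0) t == a) \prod_(y <- t) J y =
            J a * \sum_(t <- [seq behead t | t <- T & head (0,0) t == a]) \prod_(y <- t) J y.
    rewrite big_map big_filter mulr_sumr big_seq_cond [RHS]big_seq_cond; apply: eq_bigr => t /andP[tT /eqP <-].
    case: t tT => [|y t] tT; last by rewrite big_cons.
    by have := sT _ tT.
  rewrite -[X in _ <= X]mulr1; apply: ler_wpM2l => //; apply: IH.
  + rewrite map_inj_in_uniq ?filter_uniq // => t1 t2.
    rewrite !mem_filter => /andP[/eqP h1 t1T] /andP[/eqP h2 t2T] eb.
    case: t1 t2 h1 h2 t1T t2T eb => [|y1 t1] [|y2 t2] h1 h2 t1T t2T //= eb;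
      try by [have := sT _ t1T | have := sT _ t2T].
    by move: h1 h2 => /= -> ->; rewrite eb.
  + move=> t /mapP[t' ]; rewrite mem_filter => /andP[_ t'T] ->.
    by rewrite size_behead (sT _ t'T).
Qed.

Lemma prod_const_seq (R : realType) (T : Type) (s : seq T) (e : R) :
  \prod_(y <- s) e = e ^+ size s.
Proof. by elim: s => [|a s IH]; rewrite ?big_nil ?big_cons ?IH ?exprS. Qed.

Lemma norm1_sum (ys : seq Z2) : (norm1 (sumZ2 ys) <= \sum_(y <- ys) norm1 y)%N.
Proof.
elim: ys => [|y ys IH]; first by rewrite /sumZ2 /norm1 !big_nil.
rewrite /sumZ2 !big_cons /=; move: IH; rewrite /sumZ2 /norm1 /=; lia.
Qed.

Lemma sum_le_const (ys : seq Z2) (f : Z2 -> nat) c :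
  (forall y, y \in ys -> f y <= c)%N -> (\sum_(y <- ys) f y <= size ys * c)%N.
Proof.
elim: ys => [|y ys IH] H; first by rewrite big_nil.
rewrite big_cons /= mulSn leq_add //; first by apply: H; rewrite mem_head.
by apply: IH => z zs; apply: H; rewrite in_cons zs orbT.
Qed.

Lemma big_step (ys : seq Z2) :
  (0 < norm1 (sumZ2 ys))%N ->
  exists2 i, (i < size ys)%N & (norm1 (sumZ2 ys) <= size ys * norm1 (nth z0 ys i))%N.
Proof.
move=> D0; set D := norm1 (sumZ2 ys).
have [hP|hN] := boolP (has (fun y => D <= size ys * norm1 y)%N ys).
  by exists (find (fun y => D <= size ys * norm1 y)%N ys); [rewrite -has_find | exact: (nth_find z0 hP)].
exfalso.
have L0 : (0 < size ys)%N.
  by case: ys D0 {hN} @D => //; rewrite /sumZ2 /norm1 !big_nil.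
have H1 := norm1_sum ys.
have H2 : (\sum_(y <- ys) (size ys * norm1 y) <= size ys * D.-1)%N.
  apply: sum_le_const => y yin.
  have := hasPn hN y yin; rewrite -ltnNge; lia.
rewrite -big_distrr /= in H2.
have : (size ys * D <= size ys * D.-1)%N.
  by apply: leq_trans H2; rewrite leq_mul2l H1 orbT.
rewrite leq_mul2l; lia.
Qed.

Lemma prod_rmi (R : realType) (F : Z2 -> R) (s : seq Z2) i : (i < size s)%N ->
  \prod_(y <- s) F y = F (nth z0 s i) * \prod_(y <- rmi i s) F y.
Proof.
move=> iS; rewrite -{1}(cat_take_drop i s) (drop_nth z0) // big_cat big_cons /rmi big_cat /=.
by rewrite mulrCA.
Qed.

Lemma size_rmi i s : (i < size s)%N -> size (rmi i s) = (size s).-1.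
Proof. by move=> iS; rewrite /rmi size_cat size_take size_drop iS; lia. Qed.

Lemma rmi_inj i (s t : seq Z2) : (i < size s)%N -> size s = size t ->
  sumZ2 s = sumZ2 t -> rmi i s = rmi i t -> s = t.
Proof.
move=> iS sst sum_st; rewrite /rmi => /eqP; rewrite eqseq_cat; last first.
  by rewrite !size_take -sst iS.
case/andP => /eqP tk /eqP dr.
have iT : (i < size t)%N by rewrite -sst.
have E1 : s = take i s ++ nth z0 s i :: drop i.+1 s by rewrite -drop_nth // cat_take_drop.
have E2 : t = take i t ++ nth z0 t i :: drop i.+1 t by rewrite -drop_nth // cat_take_drop.
suff ni : nth z0 s i = nth z0 t i by rewrite E1 E2 tk dr ni.
move: sum_st; rewrite {1}E1 {1}E2 /sumZ2 !big_cat !big_cons /= tk dr => -[h1 h2].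
move: (nth _ s i) (nth _ t i) h1 h2 => [a1 a2] [b1 b2] /= h1 h2.
congr (_, _).
  by move: h1 => /addrI /addIr.
by move: h2 => /addrI /addIr.
Qed.

Lemma J_bound (R : realType) (J : Z2 -> R) (alpha Jc : R) (y : Z2) (L D : nat) :
  0 <= alpha -> 0 <= Jc ->
  (forall x : Z2, x != (0,0) -> J x <= Jc * (norm1 x)%:R `^ (- alpha)) ->
  (0 < D)%N -> (D <= L * norm1 y)%N ->
  J y <= Jc * L%:R `^ alpha / D%:R `^ alpha.
Proof.
move=> a0 Jc0 Jb D0 DL.
have n0 : (0 < norm1 y)%N by move: DL; case: (norm1 y) => [|n]; rewrite ?muln0; lia.
have y0 : y != (0,0).
  by apply/eqP => y0; move: n0; rewrite y0.
apply: le_trans (Jb y y0) _.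
rewrite -mulrA; apply: ler_wpM2l => //.
have hD : 0 < D%:R `^ alpha :> R by apply: powR_gt0; rewrite ltr0n.
have hn : 0 < (norm1 y)%:R `^ alpha :> R by apply: powR_gt0; rewrite ltr0n.
have key : D%:R `^ alpha <= L%:R `^ alpha * (norm1 y)%:R `^ alpha :> R.
  rewrite -powRM ?ler0n //; apply: ge0_ler_powR => //; rewrite ?nnegrE ?ler0n //.
  by rewrite -natrM ler_nat.
rewrite powRN ler_pdivlMr // mulrC -/(_ / _) ler_pdivrMr //.
Qed.

Lemma geo_sum (R : realType) N : \sum_(0 <= L < N) (2^-1 : R) ^+ L <= 2.
Proof.
have E : \sum_(0 <= L < N) (2^-1 : R) ^+ L = 2 - 2 * (2^-1) ^+ N.
  elim: N => [|N IH]; first by rewrite big_nil expr0; lra.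
  by rewrite big_nat_recr //= IH exprS; lra.
rewrite E; have h : 0 <= (2^-1 : R) ^+ N by apply: exprn_ge0; lra.
lra.
Qed.

Lemma steps_bound (R : realType) (J : Z2 -> R) (alpha Jc eps : R) :
  (forall x, 0 <= J x) -> (forall U : seq Z2, uniq U -> \sum_(u <- U) J u <= 1) ->
  0 <= alpha -> 0 <= Jc ->
  (forall x : Z2, x != (0,0) -> J x <= Jc * (norm1 x)%:R `^ (- alpha)) ->
  0 <= eps -> eps * 2 `^ alpha * 4 <= 1 ->
  forall z (S : seq (seq Z2)), (0 < norm1 z)%N -> uniq S ->
  (forall ys, ys \in S -> sumZ2 ys = z) ->
  \sum_(ys <- S) \prod_(y <- ys) (eps * J y) <= 2 * Jc / (norm1 z)%:R `^ alpha.
Proof.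
move=> J0 JU a0 Jc0 Jb e0 e1 z S D0 uS sS.
set D := norm1 z.
have hD : 0 < D%:R `^ alpha :> R by apply: powR_gt0; rewrite ltr0n.
pose c L := eps ^+ L * (Jc * L%:R `^ alpha / D%:R `^ alpha).
have c0 : forall L, 0 <= c L.
  move=> L; rewrite /c; apply: mulr_ge0; first exact: exprn_ge0.
  by apply: divr_ge0; [apply: mulr_ge0 => //; exact: powR_ge0 | exact: powR_ge0].
pose P i (ys : seq Z2) := (D <= size ys * norm1 (nth z0 ys i))%N.
pose H (ys : seq Z2) L := \sum_(i < L | P i ys) c L * \prod_(y <- rmi i ys) J y.
pose N := (\max_(ys <- S) size ys).+1.
have stepA : forall ys, ys \in S -> \prod_(y <- ys) (eps * J y) <= H ys (size ys).
  move=> ys ysS.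
  have D0' : (0 < norm1 (sumZ2 ys))%N by rewrite (sS _ ysS).
  have [i iL Pi] := @big_step ys D0'.
  rewrite (sS _ ysS) -/D in Pi.
  rewrite /H (bigD1 (Ordinal iL)) //=.
  rewrite -[X in X <= _]addr0; apply: lerD; last first.
    by apply: sumr_ge0 => j _; apply: mulr_ge0 => //; apply: prodr_ge0.
  rewrite big_split /= prod_const_seq (@prod_rmi _ J ys i iL).
  have -> : c (size ys) * \prod_(y <- rmi i ys) J y =
     eps ^+ size ys * ((Jc * (size ys)%:R `^ alpha / D%:R `^ alpha) * \prod_(y <- rmi i ys) J y).
    by rewrite /c; ring.
  apply: ler_wpM2l; first exact: exprn_ge0.
  apply: ler_wpM2r; first by apply: prodr_ge0.
  exact: (@J_bound _ J alpha Jc _ _ _ a0 Jc0 Jb D0 Pi).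
have Hsum : \sum_(ys <- S) \prod_(y <- ys) (eps * J y) <= \sum_(ys <- S) H ys (size ys).
  by rewrite big_seq [X in _ <= X]big_seq; apply: ler_sum => ys ysS; apply: stepA.
apply: (le_trans Hsum).
have sN : forall ys, ys \in S -> (size ys < N)%N.
  by move=> ys ysS; rewrite ltnS; apply: (@leq_bigmax_seq _ _ xpredT size).
have E1 : \sum_(0 <= L < N) \sum_(ys <- S | size ys == L) H ys L = \sum_(ys <- S) H ys (size ys).
  under eq_bigr do rewrite big_mkcond.
  rewrite exchange_big /=; apply: eq_big_seq => ys ysS.
  rewrite -big_mkcond /= sum_pred1_seq //; first exact: iota_uniq.
  by rewrite mem_index_iota sN.
rewrite -E1.
have E2 : forall L, \sum_(ys <- S | size ys == L) H ys L <= L%:R * c L.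
  move=> L; rewrite /H.
  have -> : \sum_(ys <- S | size ys == L) \sum_(i < L | P i ys) c L * \prod_(y <- rmi i ys) J y
     = \sum_(i < L) \sum_(ys <- S | (size ys == L) && P i ys) c L * \prod_(y <- rmi i ys) J y.
    rewrite big_mkcond /=.
    transitivity (\sum_(ys <- S) \sum_(i < L) (if (size ys == L) && P i ys
                   then c L * \prod_(y <- rmi i ys) J y else 0)).
      apply: eq_bigr => ys _; case: (size ys == L) => /=; first by rewrite big_mkcond.
      by rewrite big1.
    by rewrite exchange_big /=; apply: eq_bigr => i _; rewrite [RHS]big_mkcond.
  apply: (@le_trans _ _ (\sum_(i < L) c L)); last by rewrite sumr_const card_ord mulr_natl.
  apply: ler_sum => i _; rewrite -mulr_sumr -[X in _ <= X]mulr1; apply: ler_wpM2l => //.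
  have -> : \sum_(ys <- S | (size ys == L) && P i ys) \prod_(y <- rmi i ys) J y =
     \sum_(t <- map (rmi i) [seq ys <- S | (size ys == L) && P i ys]) \prod_(y <- t) J y.
    by rewrite big_map big_filter.
  apply: (@prod_le1 _ J J0 JU L.-1).
    rewrite map_inj_in_uniq ?filter_uniq // => t1 t2.
    rewrite !mem_filter => /andP[/andP[/eqP s1 _] t1S] /andP[/andP[/eqP s2 _] t2S] eq12.
    apply: (@rmi_inj i t1 t2 _ _ _ eq12); first by rewrite s1.
    - by rewrite s1 s2.
    - by rewrite (sS _ t1S) (sS _ t2S).
  move=> t /mapP[ys]; rewrite mem_filter => /andP[/andP[/eqP s1 _] _] ->.
  by rewrite size_rmi // s1.
have E3 : forall L, L%:R * c L <= Jc / D%:R `^ alpha * (2^-1) ^+ L.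
  move=> L.
  have -> : L%:R * c L = Jc / D%:R `^ alpha * (L%:R * L%:R `^ alpha * eps ^+ L).
    by rewrite /c; ring.
  apply: ler_wpM2l; first by apply: divr_ge0 => //; exact: powR_ge0.
  have h2 : (L%:R : R) <= 2 ^+ L.
    by rewrite -natrX ler_nat; apply: ltnW; apply: ltn_expl.
  have h3 : L%:R `^ alpha <= (2 `^ alpha) ^+ L :> R.
    have -> : (2 `^ alpha) ^+ L = (2 ^+ L) `^ alpha :> R.
      rewrite -powR_mulrn ?powR_ge0 // -powRrM mulrC powRrM powR_mulrn //.
    by apply: ge0_ler_powR => //; rewrite nnegrE ?ler0n // exprn_ge0.
  have h4 : 2 * 2 `^ alpha * eps <= 2^-1 :> R.
    have : 0 <= 2 `^ alpha :> R by apply: powR_ge0.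
    nra.
  apply: (@le_trans _ _ ((2 * 2 `^ alpha * eps) ^+ L)); last first.
    apply: lerXn2r => //; rewrite ?nnegrE //; try lra.
    by apply: mulr_ge0 => //; apply: mulr_ge0 => //; apply: powR_ge0.
  rewrite !exprMn; apply: ler_pM => //; first exact: exprn_ge0.
  by apply: ler_pM => //; exact: powR_ge0.
apply: (@le_trans _ _ (\sum_(0 <= L < N) Jc / D%:R `^ alpha * (2^-1) ^+ L)).
  by apply: ler_sum => L _; apply: le_trans (E2 L) (E3 L).
rewrite -mulr_sumr.
have -> : 2 * Jc / D%:R `^ alpha = Jc / D%:R `^ alpha * 2 by ring.
apply: ler_wpM2l; last exact: geo_sum.
by apply: divr_ge0 => //; exact: powR_ge0.
Qed.

Lemma sub_sum (R : realType) (I : eqType) (s s' : seq I) (F : I -> R) :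
  uniq s -> uniq s' -> {subset s <= s'} -> (forall i, 0 <= F i) ->
  \sum_(i <- s) F i <= \sum_(i <- s') F i.
Proof.
move=> us us' ss F0; rewrite [X in _ <= X](bigID (fun i => i \in s)) /=.
rewrite -[X in X <= _]addr0; apply: lerD; last by apply: sumr_ge0.
have pe : perm_eq [seq i <- s' | i \in s] s.
  apply: uniq_perm => //; first exact: filter_uniq.
  by move=> i; rewrite mem_filter; case: (boolP (i \in s)) => // /ss ->.
by rewrite -(perm_big _ pe) big_filter.
Qed.

Lemma inv_sq_tele (R : realType) (t : R) : 1 <= t ->
  (t ^+ 2)^-1 <= (t - 2^-1)^-1 - (t + 2^-1)^-1.
Proof.
move=> t1.
have -> : (t - 2^-1)^-1 - (t + 2^-1)^-1 = (t ^+ 2 - 4^-1)^-1.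
  by field; apply/and3P; split; rewrite gt_eqF //; nra.
rewrite lef_pV2 ?posrE; nra.
Qed.

Lemma term_bound (R : realType) (alpha r : R) (m : nat) : 2 <= alpha -> 1 <= r ->
  ((r + m%:R) `^ alpha)^-1 <= r / r `^ (alpha - 1) *
     ((r + m%:R - 2^-1)^-1 - (r + m.+1%:R - 2^-1)^-1).
Proof.
move=> a2 r1.
set t := r + m%:R.
have tr : r <= t by rewrite /t; have := ler0n R m; lra.
have t1 : 1 <= t by lra.
have -> : r + m.+1%:R - 2^-1 = t + 2^-1 by rewrite /t -natr1; lra.
apply: (@le_trans _ _ (r / r `^ (alpha - 1) * (t ^+ 2)^-1)); last first.
  apply: ler_wpM2l; last exact: inv_sq_tele.
  by apply: divr_ge0; [lra | apply: powR_ge0].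
have hr : 0 < r `^ (alpha - 2) by apply: powR_gt0; lra.
have E1 : t `^ alpha = t `^ (alpha - 2) * t ^+ 2.
  rewrite -powR_mulrn; last lra.
  rewrite -powRD; first by congr (_ `^ _); lra.
  by apply/implyP => _; apply/eqP; lra.
have E2 : r `^ (alpha - 1) = r `^ (alpha - 2) * r.
  rewrite -{3}(@powRr1 _ r); last lra.
  rewrite -powRD; first by congr (_ `^ _); lra.
  by apply/implyP => _; apply/eqP; lra.
have E3 : r `^ (alpha - 2) <= t `^ (alpha - 2).
  by apply: ge0_ler_powR; rewrite ?nnegrE; lra.
rewrite E1 E2.
have -> : r / (r `^ (alpha - 2) * r) * (t ^+ 2)^-1 = (r `^ (alpha - 2) * t ^+ 2)^-1.
  by field; apply/and3P; split; rewrite gt_eqF //; lra.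

rewrite lef_pV2 ?posrE; first by apply: ler_wpM2r => //; apply: exprn_ge0; lra.
  apply: mulr_gt0; [apply: powR_gt0; lra | apply: exprn_gt0; lra].
by apply: mulr_gt0 => //; apply: exprn_gt0; lra.
Qed.

Lemma nat_line (R : realType) (alpha r : R) (M : seq nat) : 2 <= alpha -> 1 <= r -> uniq M ->
  \sum_(m <- M) ((r + m%:R) `^ alpha)^-1 <= 2 / r `^ (alpha - 1).
Proof.
move=> a2 r1 uM.
pose K := (\max_(m <- M) m).+1.
have g0 : forall m : nat, 0 <= ((r + m%:R) `^ alpha)^-1 :> R.
  by move=> m; rewrite invr_ge0; apply: powR_ge0.
apply: (@le_trans _ _ (\sum_(0 <= m < K) ((r + m%:R) `^ alpha)^-1)).
  apply: sub_sum => //; first exact: iota_uniq.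
  by move=> m mM; rewrite mem_index_iota /= ltnS; apply: (@leq_bigmax_seq _ _ xpredT id).
pose f (m : nat) : R := (r + m%:R - 2^-1)^-1.
apply: (@le_trans _ _ (\sum_(0 <= m < K) r / r `^ (alpha - 1) * (f m - f m.+1))).
  by apply: ler_sum => m _; apply: term_bound.
rewrite -mulr_sumr.
under eq_bigr do rewrite -opprB.
rewrite sumrN telescope_sumr // opprB.
have P0 : 0 < r `^ (alpha - 1) by apply: powR_gt0; lra.
have f0 : r * f 0%N <= 2.
  rewrite /f mulr0n addr0 -/(r / _) ler_pdivrMr; lra.
have fK : 0 <= r * f K.
  by apply: mulr_ge0; [lra | rewrite /f invr_ge0; have := ler0n R K; lra].
have -> : r / r `^ (alpha - 1) * (f 0%N - f K) = (r * f 0%N - r * f K) / r `^ (alpha - 1) by ring.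
apply: ler_wpM2r; first by rewrite invr_ge0 ltW.
lra.
Qed.

Lemma int_line (R : realType) (alpha r : R) (a : int) (B : seq int) :
  2 <= alpha -> 1 <= r -> uniq B ->
  \sum_(b <- B) ((r + (absz (b - a))%:R) `^ alpha)^-1 <= 4 / r `^ (alpha - 1).
Proof.
move=> a2 r1 uB.
rewrite (bigID (fun b => a <= b)) /=.
have H1 : \sum_(b <- B | a <= b) ((r + (absz (b - a))%:R) `^ alpha)^-1 <= 2 / r `^ (alpha - 1).
  have -> : \sum_(b <- B | a <= b) ((r + (absz (b - a))%:R) `^ alpha)^-1 =
    \sum_(m <- [seq absz (b - a) | b <- B & a <= b]) ((r + m%:R) `^ alpha)^-1.
    by rewrite big_map big_filter.
  apply: nat_line => //.
  rewrite map_inj_in_uniq ?filter_uniq // => b1 b2.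
  by rewrite !mem_filter => /andP[h1 _] /andP[h2 _]; lia.
have H2 : \sum_(b <- B | ~~ (a <= b)) ((r + (absz (b - a))%:R) `^ alpha)^-1 <= 2 / r `^ (alpha - 1).
  have -> : \sum_(b <- B | ~~ (a <= b)) ((r + (absz (b - a))%:R) `^ alpha)^-1 =
    \sum_(m <- [seq absz (b - a) | b <- B & ~~ (a <= b)]) ((r + m%:R) `^ alpha)^-1.
    by rewrite big_map big_filter.
  apply: nat_line => //.
  rewrite map_inj_in_uniq ?filter_uniq // => b1 b2.
  by rewrite !mem_filter => /andP[h1 _] /andP[h2 _]; lia.
lra.
Qed.

Lemma proj_line (R : realType) (alpha r : R) (p q : Z2 -> int) (c a : int) (V : seq Z2) :
  2 <= alpha -> 1 <= r -> uniq V -> (forall u v, p u = p v -> q u = q v -> u = v) ->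
  \sum_(v <- V | p v == c) ((r + (absz (q v - a))%:R) `^ alpha)^-1 <= 4 / r `^ (alpha - 1).
Proof.
move=> a2 r1 uV pq.
have -> : \sum_(v <- V | p v == c) ((r + (absz (q v - a))%:R) `^ alpha)^-1 =
  \sum_(b <- [seq q v | v <- V & p v == c]) ((r + (absz (b - a))%:R) `^ alpha)^-1.
  by rewrite big_map big_filter.
apply: int_line => //.
rewrite map_inj_in_uniq ?filter_uniq // => u v.
rewrite !mem_filter => /andP[/eqP h1 _] /andP[/eqP h2 _] e.
by apply: pq => //; rewrite h1 h2.
Qed.

Lemma maxn_cases (a b : int) k : maxn (absz a) (absz b) = k -> absz a = k \/ absz b = k.
Proof. lia. Qed.

Lemma abs_cases (a : int) k : absz a = k -> a = k%:Z \/ a = - k%:Z.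
Proof. lia. Qed.

Lemma dist_bound (a b xa xb : int) (k n : nat) : absz a = k -> (absz xa <= n)%N ->
  (k - n + absz (b - xb)%R <= absz (a - xa)%R + absz (b - xb)%R)%N.
Proof. lia. Qed.

Lemma dist_bound2 (a b xa xb : int) (k n : nat) : absz b = k -> (absz xb <= n)%N ->
  (k - n + absz (a - xa)%R <= absz (a - xa)%R + absz (b - xb)%R)%N.
Proof. lia. Qed.

Lemma le4 (R : realType) (t a b c d : R) : 0 <= a -> 0 <= b -> 0 <= c -> 0 <= d ->
  (t <= a \/ t <= b \/ t <= c \/ t <= d) -> t <= (a + b) + (c + d).
Proof. move=> ? ? ? ? [|[|[|]]] ?; lra. Qed.

Lemma sphere_sum (R : realType) (alpha : R) (x : Z2) (k : nat) (V : seq Z2) :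
  2 <= alpha -> (normi x < k)%N -> uniq V -> (forall v, v \in V -> normi v = k) ->
  \sum_(v <- V) (((norm1 (subZ2 v x))%:R : R) `^ alpha)^-1
     <= 16 / ((k - normi x)%N%:R) `^ (alpha - 1).
Proof.
move=> a2 nk uV Vk.
set r : R := (k - normi x)%N%:R.
have r1 : 1 <= r by rewrite /r ler1n subn_gt0.
pose g1 (v : Z2) := ((r + (absz (v.2 - x.2))%:R) `^ alpha)^-1.
pose g2 (v : Z2) := ((r + (absz (v.1 - x.1))%:R) `^ alpha)^-1.
have g10 : forall v, 0 <= g1 v by move=> w; rewrite /g1 invr_ge0 powR_ge0.
have g20 : forall v, 0 <= g2 v by move=> w; rewrite /g2 invr_ge0 powR_ge0.
have nn : forall (b : bool) (y : R), 0 <= y -> 0 <= (if b then y else 0) by move=> [] y.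
have key : forall v, v \in V -> (((norm1 (subZ2 v x))%:R : R) `^ alpha)^-1 <=
   ((if v.1 == k%:Z then g1 v else 0) + (if v.1 == - k%:Z then g1 v else 0)) +
   ((if v.2 == k%:Z then g2 v else 0) + (if v.2 == - k%:Z then g2 v else 0)).
  move=> v vV; have := Vk _ vV; rewrite /normi => hv.
  have hx1 : (absz x.1 <= normi x)%N by rewrite /normi; lia.
  have hx2 : (absz x.2 <= normi x)%N by rewrite /normi; lia.
  have mono : forall (n : nat), (k - normi x + n <= norm1 (subZ2 v x))%N ->
       (((norm1 (subZ2 v x))%:R : R) `^ alpha)^-1 <= ((r + n%:R) `^ alpha)^-1.
    move=> n hn; rewrite lef_pV2 ?posrE.
    - apply: ge0_ler_powR; rewrite ?nnegrE ?ler0n; try lra.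
        by have := ler0n R n; lra.
      by rewrite /r -natrD ler_nat.
    - by apply: powR_gt0; rewrite ltr0n; lia.
    - by apply: powR_gt0; have := ler0n R n; lra.
  apply: le4; try by case: ifP => _ //.
  have [h1|h2] := maxn_cases _ _ _ hv.
  - have t1 : (((norm1 (subZ2 v x))%:R : R) `^ alpha)^-1 <= g1 v.
      by apply: (mono (absz (v.2 - x.2))); exact: (@dist_bound v.1 v.2 x.1 x.2 k (normi x) h1 hx1).
    have [e|e] := abs_cases _ _ h1.
    + by left; rewrite e eqxx.
    + by right; left; rewrite e eqxx.
  - have t1 : (((norm1 (subZ2 v x))%:R : R) `^ alpha)^-1 <= g2 v.
      by apply: (mono (absz (v.1 - x.1))); exact: (@dist_bound2 v.1 v.2 x.1 x.2 k (normi x) h2 hx2).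
    have [e|e] := abs_cases _ _ h2.
    + by right; right; left; rewrite e eqxx.
    + by right; right; right; rewrite e eqxx.
apply: (@le_trans _ _ (\sum_(v <- V)
   (((if v.1 == k%:Z then g1 v else 0) + (if v.1 == - k%:Z then g1 v else 0)) +
   ((if v.2 == k%:Z then g2 v else 0) + (if v.2 == - k%:Z then g2 v else 0))))).
  by rewrite big_seq [X in _ <= X]big_seq; apply: ler_sum => v vV; exact: key.
rewrite !big_split /= -!big_mkcond /=.
have inj1 : forall u v : Z2, u.1 = v.1 -> u.2 = v.2 -> u = v by move=> [? ?] [? ?] /= -> ->.
have inj2 : forall u v : Z2, u.2 = v.2 -> u.1 = v.1 -> u = v by move=> [? ?] [? ?] /= -> ->.
have b1 := @proj_line R alpha r fst snd (k%:Z) x.2 V a2 r1 uV inj1.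
have b2 := @proj_line R alpha r fst snd (- k%:Z) x.2 V a2 r1 uV inj1.
have b3 := @proj_line R alpha r snd fst (k%:Z) x.1 V a2 r1 uV inj2.
have b4 := @proj_line R alpha r snd fst (- k%:Z) x.1 V a2 r1 uV inj2.
rewrite /g1 /g2 /=; lra.
Qed.

Lemma e0P : lexlt ((0,0):Z2) (0,1). Proof. by []. Qed.
Definition e0 : edge := exist _ (((0,0):Z2),((0,1):Z2)) e0P.
Definition ed (u v : Z2) : edge := insubd e0 (if lexlt u v then (u,v) else (v,u)).

Lemma lexlt_total {u v : Z2} : u != v -> lexlt u v || lexlt v u.
Proof. case: u v => [a b] [c d]; rewrite /lexlt /= xpair_eqE. lia. Qed.
Lemma lexlt_irr {u : Z2} : ~~ lexlt u u.
Proof. case: u => [a b]; rewrite /lexlt /=; lia. Qed.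
Lemma lexlt_asym {u v : Z2} : lexlt u v -> ~~ lexlt v u.
Proof. case: u v => [a b] [c d]; rewrite /lexlt /=; lia. Qed.

Lemma val_ed {u v : Z2} : lexlt u v -> val (ed u v) = (u, v).
Proof. by move=> h; rewrite /ed h insubdK. Qed.

Lemma val_ed' {u v : Z2} : lexlt v u -> val (ed u v) = (v, u).
Proof. by move=> h; rewrite /ed (negbTE (lexlt_asym h)) insubdK. Qed.

Lemma val_ed_cases {u v : Z2} : u != v -> val (ed u v) = (u, v) \/ val (ed u v) = (v, u).
Proof.
move=> uv; case/orP: (lexlt_total uv) => h; [left; exact: val_ed | right; exact: val_ed'].
Qed.

Lemma ed_sym (u v : Z2) : ed u v = ed v u.
Proof.
have [->//|uv] := eqVneq u v.
apply: val_inj; case/orP: (lexlt_total uv) => h.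
  by rewrite (val_ed h) (val_ed' h).
by rewrite (val_ed h) (val_ed' h).
Qed.

Lemma ed_of_val (e : edge) : ed (val e).1 (val e).2 = e.
Proof. by apply: val_inj; rewrite val_ed ?(valP e) //; case: (val e). Qed.

Lemma edge_neq (e : edge) : (val e).1 != (val e).2.
Proof. by apply/eqP => h; have := valP e; rewrite h (negbTE lexlt_irr). Qed.

Definition adjb (w : edge -> bool) (a b : Z2) : bool := (a != b) && w (ed a b).

Lemma adjP (w : edge -> bool) (a b : Z2) : adj w a b <-> adjb w a b.
Proof.
split.
- move=> [e [we [E|E]]].
  + have ab : a != b by have := edge_neq e; rewrite E.
    rewrite /adjb; have -> : ed a b = e by rewrite -(ed_of_val e) E.
    by rewrite ab we.
  + have ab : a != b by have := edge_neq e; rewrite E eq_sym.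
    rewrite /adjb; have -> : ed a b = e by rewrite ed_sym -(ed_of_val e) E.
    by rewrite ab we.
- case/andP => ab wab; exists (ed a b); split => //.
  exact: val_ed_cases.
Qed.

Lemma adjb_sym w a b : adjb w a b = adjb w b a.
Proof. by rewrite /adjb eq_sym ed_sym. Qed.

Definition edges (x : Z2) (p : seq Z2) := pairmap ed x p.
Definition steps (x : Z2) (p : seq Z2) := pairmap (fun a b => subZ2 b a) x p.

Lemma path_open {w x p} : path (adjb w) x p -> all w (edges x p).
Proof.
elim: p x => [|y p IH] x //= /andP[/andP[_ wxy] pp].
by rewrite wxy IH.
Qed.

Lemma conn_sym w a b : conn w a b -> conn w b a.
Proof.
elim => [u v /adjP h|u|u v z _ IH1 _ IH2].
- by apply: rt_step; apply/adjP; rewrite adjb_sym.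
- exact: rt_refl.
- exact: rt_trans IH2 IH1.
Qed.

Lemma conn_to_path {w v x} : conn w v x ->
  exists p, [/\ uniq (x :: p), all w (edges x p) & last x p = v].
Proof.
move=> /conn_sym h.
have [p [pp lp]] : exists p, path (adjb w) x p /\ last x p = v.
  elim: h => [a b /adjP h|a|a b c _ [p1 [pp1 lp1]] _ [p2 [pp2 lp2]]].
  - by exists [:: b]; rewrite /= h.
  - by exists [::].
  - exists (p1 ++ p2); rewrite cat_path last_cat lp1 pp1 pp2; split => //.
move: lp; case: (shortenP pp) => p' pp' up' _ lp'.
by exists p'; split => //; apply: path_open.
Qed.

Lemma path_to_conn {w x p} : uniq (x :: p) -> all w (edges x p) -> conn w (last x p) x.
Proof.
elim: p x => [|y p IH] x; first by move=> _ _; exact: rt_refl.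
rewrite /= => /andP[xyp uyp] /andP[wxy ap].
apply: rt_trans (IH y uyp ap) _.
apply: rt_step; apply/adjP; rewrite /adjb ed_sym wxy andbT.
by apply: contraNneq xyp => ->; rewrite mem_head.
Qed.

Lemma mem_edges {x p e} : uniq (x :: p) -> e \in edges x p ->
  (val e).1 \in x :: p /\ (val e).2 \in x :: p.
Proof.
elim: p x => [|y p IH] x //= /andP[xyp uyp]; rewrite in_cons => /orP[/eqP ->|ein].
- have xy : x != y by apply: contraNneq xyp => ->; rewrite mem_head.
  by case: (val_ed_cases xy) => ->; rewrite /= !in_cons !eqxx ?orbT.
- have [h1 h2] := IH y uyp ein.
  by split; rewrite in_cons ?h1 ?h2 orbT.
Qed.

Lemma uniq_edges x p : uniq (x :: p) -> uniq (edges x p).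
Proof.
elim: p x => [|y p IH] x //= /andP[xyp uyp]; rewrite IH // andbT.
apply/negP => /(mem_edges uyp) [h1 h2].
have xy : x != y by apply: contraNneq xyp => ->; rewrite mem_head.
case: (val_ed_cases xy) h1 h2 => -> /= h1 h2.
- by move: xyp; rewrite in_cons negb_or => /andP[_]; move: h1; rewrite in_cons => /orP[/eqP e|->] //; rewrite e eqxx in xy.
- by move: xyp; rewrite in_cons negb_or => /andP[_]; move: h2; rewrite in_cons => /orP[/eqP e|->] //; rewrite e eqxx in xy.
Qed.

Lemma steps_inj x p q : steps x p = steps x q -> p = q.
Proof.
elim: p q x => [|y p IH] [|z q] x //= [e1 e2 e3].
have yz : y = z.
  by move: e1 e2; case: y z {e3} => [a b] [c d] /= /addIr h1 /addIr h2; rewrite h1 h2.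
by rewrite -yz in e3 *; rewrite (IH q y e3).
Qed.

Lemma sum_steps x p : sumZ2 (steps x p) = subZ2 (last x p) x.
Proof.
elim: p x => [|y p IH] x; first by rewrite /sumZ2 /subZ2 !big_nil /= !subrr.
rewrite /= /sumZ2 !big_cons.
have := IH y; rewrite /sumZ2 => -[-> ->].
by rewrite /subZ2 /=; congr (_, _); ring.
Qed.

Lemma J_partial (R : realType) (J : Z2 -> R) : (forall x, 0 <= J x) ->
  (\esum_(x in [set: Z2]) (J x)%:E = 1%E) ->
  forall U : seq Z2, uniq U -> \sum_(u <- U) J u <= 1.
Proof.
move=> J0 HJ U uU; rewrite -lee_fin -HJ -sumEFin.
apply: esum_ge; exists [set` U]; first by split; [exact: finite_seq | by []].
by rewrite (fsbig_seq _ _ uU).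
Qed.

Lemma prod_edges (R : realType) (J : Z2 -> R) (eps : R) x p :
  (forall y, J y = J (subZ2 (0, 0) y)) -> uniq (x :: p) ->
  \prod_(e <- edges x p) eps_prob J eps e = \prod_(y <- steps x p) (eps * J y).
Proof.
move=> Js; elim: p x => [|y p IH] x; first by rewrite !big_nil.
rewrite /= => /andP[xyp uyp].
rewrite /edges /steps /= !big_cons -/(edges y p) -/(steps y p) IH //.
congr (_ * _); rewrite /eps_prob; congr (_ * _).
have xy : x != y by apply: contraNneq xyp => ->; rewrite mem_head.
case: (val_ed_cases xy) => -> //=.
rewrite Js; congr (J _); rewrite /subZ2 /=; congr (_, _); ring.
Qed.

Lemma normi_le (v x : Z2) : (normi v <= normi x + norm1 (subZ2 v x))%N.
Proof. rewrite /normi /norm1 /subZ2 /=; lia. Qed.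

Lemma paths_bound (R : realType) (J : Z2 -> R) (alpha Jc eps : R) (x : Z2) (k : nat)
    (Ps : seq (seq Z2)) :
  (forall x, 0 <= J x) -> (forall U : seq Z2, uniq U -> \sum_(u <- U) J u <= 1) ->
  2 <= alpha -> 0 <= Jc ->
  (forall x : Z2, x != (0,0) -> J x <= Jc * (norm1 x)%:R `^ (- alpha)) ->
  0 <= eps -> eps * 2 `^ alpha * 4 <= 1 ->
  (normi x < k)%N -> uniq Ps ->
  (forall p, p \in Ps -> uniq (x :: p) /\ normi (last x p) = k) ->
  \sum_(p <- Ps) \prod_(y <- steps x p) (eps * J y)
     <= 32 * Jc / ((k - normi x)%N%:R) `^ (alpha - 1).
Proof.
move=> J0 JU a2 Jc0 Jb e0 e1 nk uPs hP.
rewrite (@sum_group _ _ _ Ps (last x)).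
set V := undup (map (last x) Ps).
have hV : forall v, v \in V -> normi v = k.
  by move=> v; rewrite mem_undup => /mapP[p pin ->]; case: (hP p pin).
apply: (@le_trans _ _ (\sum_(v <- V) 2 * Jc / (norm1 (subZ2 v x))%:R `^ alpha)).
  rewrite big_seq [X in _ <= X]big_seq; apply: ler_sum => v vV.
  have -> : \sum_(p <- Ps | last x p == v) \prod_(y <- steps x p) (eps * J y) =
     \sum_(ys <- map (steps x) [seq p <- Ps | last x p == v]) \prod_(y <- ys) (eps * J y).
    by rewrite big_map big_filter.
  apply: (@steps_bound R J alpha Jc eps J0 JU _ Jc0 Jb e0 e1 (subZ2 v x)).
  - by lra.
  - have := normi_le v x; rewrite (hV v vV); lia.
  - rewrite map_inj_in_uniq ?filter_uniq // => p q _ _; exact: steps_inj.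
  - move=> ys /mapP[p]; rewrite mem_filter => /andP[/eqP lp _] ->.
    by rewrite sum_steps lp.
rewrite -mulr_sumr.
apply: (@le_trans _ _ (2 * Jc * (16 / ((k - normi x)%N%:R) `^ (alpha - 1)))).
  apply: ler_wpM2l; first lra.
  by apply: sphere_sum => //; exact: undup_uniq.
by rewrite le_eqVlt; apply/orP; left; apply/eqP; ring.
Qed.

Definition Oev {d} {T : measurableType d} (omega : T -> edge -> bool) (x : Z2) (p : seq Z2) : set T :=
  \bigcap_(e in [set` edges x p]) [set t | omega t e].

Lemma Oev_P {d} {T : measurableType d} (omega : T -> edge -> bool) x p t :
  Oev omega x p t <-> all (omega t) (edges x p).
Proof.
split; first by move=> h; apply/allP => e ein; exact: h e ein.
by move/allP => h e ein; exact: h e ein.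
Qed.

Definition cand (Pe : pred Z2) (x : Z2) (n : nat) : option (seq Z2) :=
  obind (fun p => if uniq (x :: p) && Pe (last x p) then Some p else None)
        (@pickle_inv (seq Z2) n).

Definition Qn {d} {T : measurableType d} (omega : T -> edge -> bool) (Pe : pred Z2) (x : Z2)
  (n : nat) : set T :=
  if cand Pe x n is Some p then Oev omega x p else set0.

Definition Gev {d} {T : measurableType d} (omega : T -> edge -> bool) (Pe : pred Z2) (x : Z2) : set T :=
  [set t | exists v, Pe v /\ conn (omega t) v x].

Lemma G_eq {d} {T : measurableType d} (omega : T -> edge -> bool) Pe x :
  Gev omega Pe x = \bigcup_n Qn omega Pe x n.
Proof.
apply/seteqP; split => t.
- move=> [v [Pv cv]]; have [p [up ap lp]] := conn_to_path cv.
  exists (pickle p) => //; rewrite /Qn /cand pickleK_inv /= -[(x \notin p) && uniq p]/(uniq (x :: p)) up lp Pv /=.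
  exact/Oev_P.
- move=> [n _]; rewrite /Qn; case hc: (cand Pe x n) => [p|] // /Oev_P ap.
  move: hc; rewrite /cand; case: (pickle_inv n) => [q|] //=.
  case: ifP => // /andP[uq Pq] [eq]; subst q.
  by exists (last x p); split => //; exact: path_to_conn.
Qed.

Lemma cand_pickle Pe x : ocancel (cand Pe x) pickle.
Proof.
move=> n; rewrite /cand; have := @pickle_invK (seq Z2) n.
by case: (pickle_inv n) => [q /= h|//]; case: ifP.
Qed.

Lemma mA_eq (R : realType) w x (k : nat) : (0 < k)%N ->
  (mA R w x = (k%:R)%:E) <->
  ((exists v, normi v = k /\ conn w v x) /\ ~ (exists u, (k < normi u)%N /\ conn w u x)).
Proof.
move=> k0; rewrite /mA; set S := [set _ | v in _].
split.
- move=> hs; split.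
  + have : (((k.-1)%:R : R)%:E < ereal_sup S)%E by rewrite hs lte_fin ltr_nat; lia.
    case/ereal_sup_gt => _ [v cv <-]; rewrite lte_fin ltr_nat => hv.
    have : S ((normi v)%:R : R)%:E by exists v.
    move/ereal_sup_ubound; rewrite hs lee_fin ler_nat => hv2.
    by exists v; split => //; lia.
  + move=> [u [hu cu]].
    have : S ((normi u)%:R : R)%:E by exists u.
    by move/ereal_sup_ubound; rewrite hs lee_fin ler_nat; lia.
- move=> [[v [hv cv]] hno]; apply/eqP; rewrite eq_le; apply/andP; split.
  + apply: ge_ereal_sup => _ [u cu <-]; rewrite lee_fin ler_nat leqNgt.
    by apply/negP => hu; apply: hno; exists u.
  + by apply: ereal_sup_ubound; exists v => //; rewrite hv.
Qed.

Lemma prob_bound (R : realType) (J : Z2 -> R) (alpha Jc eps : R) d (T : measurableType d)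
    (P : probability T R) (omega : T -> edge -> bool) (x : Z2) (k : nat) :
  (forall x, 0 <= J x) -> (forall U : seq Z2, uniq U -> \sum_(u <- U) J u <= 1) ->
  (forall y, J y = J (subZ2 (0, 0) y)) ->
  2 <= alpha -> 0 <= Jc ->
  (forall x : Z2, x != (0,0) -> J x <= Jc * (norm1 x)%:R `^ (- alpha)) ->
  0 <= eps -> eps * 2 `^ alpha * 4 <= 1 ->
  bernoulli_percolation P omega (eps_prob J eps) ->
  (normi x < k)%N ->
  (P [set t | mA R (omega t) x = (k%:R)%:E]
     <= (32 * Jc / ((k - normi x)%N%:R) `^ (alpha - 1))%:E)%E.
Proof.
move=> J0 JU Js a2 Jc0 Jb e0 e1 [hm hp hi] nk.
have k0 : (0 < k)%N by lia.
have -> : [set t | mA R (omega t) x = (k%:R)%:E] =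
   Gev omega (fun v => normi v == k) x `&` ~` Gev omega (fun u => k < normi u)%N x.
  apply/seteqP; split => t /=.
  - move/(@mA_eq R _ x k k0) => [[v [hv cv]] hno]; split; first by exists v; rewrite hv eqxx.
    by move=> [u [hu cu]]; apply: hno; exists u.
  - move=> [[v [/eqP hv cv]] hno]; apply/(@mA_eq R _ x k k0); split; first by exists v.
    by move=> [u [hu cu]]; apply: hno; exists u.
have mQ : forall Pe n, measurable (Qn omega Pe x n).
  move=> Pe n; rewrite /Qn; case: (cand Pe x n) => [p|]; last exact: measurable0.
  by apply: fin_bigcap_measurable; [exact: finite_seq | move=> e _; exact: hm].
have mG : forall Pe, measurable (Gev omega Pe x).
  by move=> Pe; rewrite G_eq; apply: bigcupT_measurable => n; exact: mQ.
apply: (@le_trans _ _ (P (Gev omega (fun v => normi v == k) x))).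
  apply: le_measure; rewrite ?inE.
  - apply: measurableI; first exact: (mG (fun v => normi v == k)).
    by apply: measurableC; exact: (mG (fun u => (k < normi u)%N)).
  - exact: (mG (fun v => normi v == k)).
  - by move=> t [].
set Pe := (fun v => normi v == k).
apply: (@le_trans _ _ (\sum_(0 <= n <oo) P (Qn omega Pe x n))%E).
  apply: measure_sigma_subadditive; [move=> n; exact: (mQ Pe n) | exact: (mG Pe) |].
  by rewrite G_eq.
apply: lime_le; first by apply: is_cvg_nneseries => n _ _; exact: measure_ge0.
apply: nearW => N.
have PQ : forall n, P (Qn omega Pe x n) =
   (oapp (fun p => \prod_(y <- steps x p) (eps * J y)) 0 (cand Pe x n))%:E.
  move=> n; rewrite /Qn; case hc: (cand Pe x n) => [p|] /=; last exact: measure0.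
  have up : uniq (x :: p).
    by move: hc; rewrite /cand; case: (pickle_inv n) => [q|] //=; case: ifP => // /andP[] ? _ [<-].
  rewrite /Oev (hi _ (uniq_edges _ _ up)).
  rewrite (eq_bigr (fun e => (eps_prob J eps e)%:E)); last by move=> e _; exact: hp.
  by rewrite prodEFin prod_edges.
under eq_bigr do rewrite PQ.
rewrite sumEFin -big_pmap lee_fin.
apply: (@paths_bound R J alpha Jc eps x k) => //.
- have := filter_uniq (fun n => cand Pe x n) (iota_uniq 0 (N - 0)).
  by rewrite -(pmap_filter (cand_pickle Pe x)) => /map_uniq.
- move=> p; rewrite mem_pmap => /mapP[n _].
  rewrite /cand; case: (pickle_inv n) => [q|] //=; case: ifP => // /andP[uq /eqP lq] [e].
  by rewrite e.
Qed.

Theorem propositionA2 (R : realType) (J : Z2 -> R) (alpha Jc : R) :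
  (forall x, 0 <= J x) ->
  (forall x, J x = J (subZ2 (0, 0) x)) ->
  (\esum_(x in [set: Z2]) (J x)%:E = 1%E) ->
  4 < alpha -> 0 <= Jc ->
  (forall x : Z2, x != (0, 0) -> J x <= Jc * (norm1 x)%:R `^ (- alpha)) ->
  exists eps0 : R, 0 < eps0 /\
    forall eps : R, 0 < eps -> eps <= eps0 ->
    exists C1 : R,
      forall d (T : measurableType d) (P : probability T R) (omega : T -> edge -> bool),
        bernoulli_percolation P omega (eps_prob J eps) ->
        forall (x : Z2) (k : nat), (normi x < k)%N ->
          (P [set t | mA R (omega t) x = (k%:R)%:E]
             <= (C1 / (k%:R - (normi x)%:R) `^ (alpha - 1))%:E)%E.
Proof.
move=> J0 Js HJ a4 Jc0 Jb.
have JU := @J_partial R J J0 HJ.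
have p2 : 0 < 2 `^ alpha :> R by apply: powR_gt0; lra.
exists ((2 `^ alpha * 4)^-1); split; first by rewrite invr_gt0; apply: mulr_gt0 => //; lra.
move=> eps ep ee; exists (32 * Jc) => d T P omega hb x k nk.
rewrite -natrB; last exact: ltnW.
apply: (@prob_bound R J alpha Jc eps d T P omega x k) => //; try lra.
have q0 : 0 < 2 `^ alpha * 4 :> R by apply: mulr_gt0 => //; lra.
by rewrite -mulrA -ler_pdivlMr // div1r.
Qed.
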